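(* Let $T$ be a positive integer, $(\Omega,\mathcal{F},P)$ a probability space, $\mathbb{F}=(\mathcal{F}_t)_{t=0}^T$, $\mathbb{G}=(\mathcal{G}_t)_{t=0}^T$ filtrations with $\mathcal{G}_t\subseteq\mathcal{F}_t$, and $X^1,X^2,Y^1,Y^2$ real-valued $\mathbb{F}$-adapted processes indexed by $\{0,\dots,T\}$ with $E(\max_{0\le t\le T}|S_t|)<\infty$ for each $S\in\{X^1,X^2,Y^1,Y^2\}$, where $X^2,Y^2$ are moreover $\mathbb{G}$-adapted. Let $\Gamma$ be the game in which Player 1 chooses $\tau\in\mathcal{T}(\mathbb{F})$, Player 2 chooses $\nu\in\mathcal{T}(\mathbb{G})$, with expected utilities \[J_1(\tau,\nu)=E\left[X^1_\tau\mathbf{1}_{\{\tau\le\nu\}}+Y^1_\nu\mathbf{1}_{\{\tau>\nu\}}\right],\qquad J_2(\tau,\nu)=E\left[X^2_\nu\mathbf{1}_{\{\nu<\tau\}}+Y^2_\tau\mathbf{1}_{\{\tau\le\nu\}}\right].\] Assume $X^1_t\ge Y^1_t$ for every $0\le t\le T$, $P$-a.s. Let $\epsilon>0$ and let $\Gamma_\epsilon$ be identical to $\Gamma$ except that the expected utility of Player 1 is \[J_{1,\epsilon}(\tau,\nu)=E\left[(X^1_\tau+\epsilon)\mathbf{1}_{\{\tau\le\nu\}}+Y^1_\nu\mathbf{1}_{\{\tau>\nu\}}\right].\] If $(\tau_0,\nu_0)\in\mathcal{T}(\mathbb{F})\times\mathcal{T}(\mathbb{G})$ is a pure-strategy Nash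 equilibrium in $\Gamma_\epsilon$, then it is also a pure-strategy Nash equilibrium in $\Gamma$.
   Context: Time is discrete in $\{0,\dots,T\}$. For a filtration $\mathbb{H}$, $\mathcal{T}(\mathbb{H})$ is the set of $\mathbb{H}$-stopping times with values in $\{0,\dots,T\}$. A pair $(\tau^*,\nu^* )\in\mathcal{T}(\mathbb{F})\times\mathcal{T}(\mathbb{G})$ is a pure-strategy Nash equilibrium of a game with utilities $(U_1,U_2)$ if $U_1(\tau,\nu^* )\le U_1(\tau^*,\nu^* )$ for all $\tau\in\mathcal{T}(\mathbb{F})$ and $U_2(\tau^*,\nu)\le U_2(\tau^*,\nu^* )$ for all $\nu\in\mathcal{T}(\mathbb{G})$. *)

(* Defs.v *)
From mathcomp Require Import all_boot all_order all_algebra.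
From mathcomp Require Import all_classical all_reals all_analysis.
Set Implicit Arguments. Unset Strict Implicit. Unset Printing Implicit Defensive.
Import Order.TTheory GRing.Theory Num.Theory.
Local Open Scope classical_set_scope.
Local Open Scope ring_scope.

Section Defs.
Context {d : measure_display} {Omega : measurableType d} {R : realType}.

Definition is_filtration (T : nat) (F : nat -> set (set Omega)) : Prop :=
  (forall t, (t <= T)%N -> sigma_algebra setT (F t)) /\
  (forall t, (t <= T)%N -> F t `<=` measurable) /\
  (forall s t, (s <= t)%N -> (t <= T)%N -> F s `<=` F t).

Definition stopping_time (T : nat) (H : nat -> set (set Omega))
    (tau : Omega -> nat) : Prop :=
  (forall w, (tau w <= T)%N) /\
  (forall t, (t <= T)%N -> H t [set w | (tau w <= t)%N]).

Definition adapted (T : nat) (H : nat -> set (set Omega))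
    (X : nat -> Omega -> R) : Prop :=
  forall t, (t <= T)%N -> forall B : set R, measurable B -> H t (X t @^-1` B).

Definition integrable_max (P : probability Omega R) (T : nat)
    (X : nat -> Omega -> R) : Prop :=
  P.-integrable setT (fun w => (\big[Num.max/0]_(t < T.+1) `|X t w|)%:E).

Definition nash_eq (S1 S2 : (Omega -> nat) -> Prop)
    (U1 U2 : (Omega -> nat) -> (Omega -> nat) -> \bar R)
    (tau0 nu0 : Omega -> nat) : Prop :=
  S1 tau0 /\ S2 nu0 /\
  (forall tau, S1 tau -> (U1 tau nu0 <= U1 tau0 nu0)%E) /\
  (forall nu, S2 nu -> (U2 tau0 nu <= U2 tau0 nu0)%E).

(* J_1^eps(tau,nu) = E[(X1_tau + eps) 1_{tau<=nu} + Y1_nu 1_{tau>nu}];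
   eps = 0 gives J_1. *)
Definition J1 (P : probability Omega R) (X1 Y1 : nat -> Omega -> R) (eps : R)
    (tau nu : Omega -> nat) : \bar R :=
  (\int[P]_w ((if (tau w <= nu w)%N then X1 (tau w) w + eps else 0)
              + (if (nu w < tau w)%N then Y1 (nu w) w else 0))%:E)%E.

Definition J2 (P : probability Omega R) (X2 Y2 : nat -> Omega -> R)
    (tau nu : Omega -> nat) : \bar R :=
  (\int[P]_w ((if (nu w < tau w)%N then X2 (nu w) w else 0)
              + (if (tau w <= nu w)%N then Y2 (tau w) w else 0))%:E)%E.

End Defs.

(* Main.v *)
Require Import Defs.
From mathcomp Require Import all_boot all_order all_algebra.
From mathcomp Require Import all_classical all_reals all_analysis.
From mathcomp Require Import zify ring lra.
Set Implicit Arguments. Unset Strict Implicit. Unset Printing Implicit Defensive.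
Import Order.TTheory GRing.Theory Num.Theory.
Local Open Scope classical_set_scope.
Local Open Scope ring_scope.

Section Aux.
Context {d : measure_display} {Omega : measurableType d} {R : realType}.

Lemma st_eq_meas T (F : nat -> set (set Omega)) tau :
  is_filtration T F -> stopping_time T F tau ->
  forall i, (i <= T)%N -> measurable [set w | tau w = i].
Proof.
move=> [_ [FM _]] [_ Hs] i iT.
case: i iT => [|i] iT.
  have -> : [set w | tau w = 0%N] = [set w | (tau w <= 0)%N].
    by apply/seteqP; split => w /=; [move=> -> | rewrite leqn0 => /eqP].
  exact: FM _ iT _ (Hs _ iT).
have -> : [set w | tau w = i.+1] =
    [set w | (tau w <= i.+1)%N] `\` [set w | (tau w <= i)%N].
  apply/seteqP; split => w /=; first by move=> ->; rewrite leqnn ltnn.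
  by move=> [h1 h2]; apply/eqP; rewrite eqn_leq h1 /= ltnNge; apply/negP.
apply: measurableD; apply: FM; try apply: Hs; lia.
Qed.

Lemma meas_comp_st T (tau : Omega -> nat) (k : nat -> Omega -> R) :
  (forall w, (tau w <= T)%N) ->
  (forall i, (i <= T)%N -> measurable [set w | tau w = i]) ->
  (forall i, (i <= T)%N -> measurable_fun setT (k i)) ->
  measurable_fun setT (fun w => k (tau w) w).
Proof.
move=> tT mt mk _ B mB; rewrite setTI.
have -> : (fun w => k (tau w) w) @^-1` B = \bigcup_i
   (if (i <= T)%N then [set w | tau w = i] `&` k i @^-1` B else set0).
  apply/seteqP; split => w /=.
    by move=> Bw; exists (tau w) => //; rewrite tT.
  by move=> [i _]; case: ifP => // _ [/= <-].
apply: bigcupT_measurable => i; case: ifP => // iT; apply: measurableI.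
  exact: mt.
by rewrite -[_ @^-1` _]setTI; apply: mk.
Qed.

Lemma adapted_meas T F (X : nat -> Omega -> R) :
  is_filtration T F -> adapted T F X ->
  forall t, (t <= T)%N -> measurable_fun setT (X t).
Proof.
move=> [_ [FM _]] aX t tT _ B mB; rewrite setTI; apply: (FM t tT); exact: aX.
Qed.

Lemma le_bigmaxR n (f : nat -> R) i : (i < n)%N ->
  f i <= \big[Num.max/0]_(t < n) f t.
Proof. move=> h; exact: (le_bigmax 0 (fun t : 'I_n => f t) (Ordinal h)). Qed.

Lemma bigmax_ge0 n (f : nat -> R) : 0 <= \big[Num.max/0]_(t < n.+1) `|f t|.
Proof. apply: le_trans (normr_ge0 (f 0%N)) _; exact: (@le_bigmaxR n.+1 (fun t => `|f t|) 0%N (ltn0Sn n)). Qed.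


Definition gJ (X1 Y1 : nat -> Omega -> R) (e : R) (i j : nat) (w : Omega) : R :=
  (if (i <= j)%N then X1 i w + e else 0) + (if (j < i)%N then Y1 j w else 0).

Definition MB (X : nat -> Omega -> R) T w := \big[Num.max/0]_(t < T.+1) `|X t w|.

Lemma gJ_meas T F G X1 Y1 e tau nu :
  is_filtration T F -> is_filtration T G ->
  adapted T F X1 -> adapted T F Y1 ->
  stopping_time T F tau -> stopping_time T G nu ->
  measurable_fun setT (fun w => gJ X1 Y1 e (tau w) (nu w) w).
Proof.
move=> hF hG aX aY st sn.
have mX := adapted_meas hF aX; have mY := adapted_meas hF aY.
apply: (@meas_comp_st T tau (fun i w => gJ X1 Y1 e i (nu w) w)).
- by case: st.
- exact: st_eq_meas hF st.
move=> i iT.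
apply: (@meas_comp_st T nu (fun j w => gJ X1 Y1 e i j w)).
- by case: sn.
- exact: st_eq_meas hG sn.
move=> j jT; rewrite /gJ.
case: (i <= j)%N; case: (j < i)%N; apply: measurable_realfun.measurable_funD;
  try apply: measurable_realfun.measurable_funD;
  first [exact: measurable_cst | exact: mX | exact: mY].
Qed.

Lemma gJ_bound T X1 Y1 e i j w : (i <= T)%N -> (j <= T)%N ->
  `|gJ X1 Y1 e i j w| <= MB X1 T w + MB Y1 T w + `|e|.
Proof.
move=> iT jT.
have hx : `|X1 i w| <= MB X1 T w by exact: (@le_bigmaxR T.+1 (fun t => `|X1 t w|)).
have hy : `|Y1 j w| <= MB Y1 T w by exact: (@le_bigmaxR T.+1 (fun t => `|Y1 t w|)).
have h0x : 0 <= MB X1 T w by exact: (@bigmax_ge0 T (fun t => X1 t w)).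
have h0y : 0 <= MB Y1 T w by exact: (@bigmax_ge0 T (fun t => Y1 t w)).
have h1 := ler_normD (X1 i w) e.
have h2 := normr_ge0 e.
rewrite /gJ; case: ifP => _; case: ifP => _; apply: le_trans (ler_normD _ _) _;
  rewrite ?normr0; lra.
Qed.

Lemma int_bound (P : probability Omega R) T X1 Y1 (e : R) (f : Omega -> R) :
  integrable_max P T X1 -> integrable_max P T Y1 ->
  measurable_fun setT f ->
  (forall w, `|f w| <= MB X1 T w + MB Y1 T w + `|e|) ->
  P.-integrable setT (fun w => (f w)%:E).
Proof.
move=> iX iY mf hf.
have ic := finite_measure_integrable_cst P `|e| (@measurableT _ Omega).
have iB := integrableD measurableT (integrableD measurableT iX iY) ic.
apply: (le_integrable measurableT _ _ iB).
- exact/measurable_realfun.measurable_EFinP.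
move=> w _ /=; rewrite lee_fin.
apply: le_trans (hf w) _; exact: ler_norm.
Qed.

Lemma st_min T (F G : nat -> set (set Omega)) (tau nu : Omega -> nat) :
  is_filtration T F -> (forall t, (t <= T)%N -> G t `<=` F t) ->
  stopping_time T F tau -> stopping_time T G nu ->
  stopping_time T F (fun w => minn (tau w) (nu w)).
Proof.
move=> [sF _] GF [tT Ht] [nT Hn]; split => [w|t tT'].
  by rewrite geq_min tT.
have -> : [set w | (minn (tau w) (nu w) <= t)%N] = \bigcup_k
   (if k == 0%N then [set w | (tau w <= t)%N] else [set w | (nu w <= t)%N]).
  apply/seteqP; split => w /=.
    by rewrite geq_min => /orP[h|h]; [exists 0%N | exists 1%N].
  by move=> [k _]; case: eqP => _ h; rewrite geq_min h ?orbT.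
case: (sF t tT') => _ _; apply => k; case: eqP => _.
  exact: Ht.
exact: GF _ tT' _ (Hn _ tT').
Qed.


Lemma J1E (P : probability Omega R) X1 Y1 e (tau nu : Omega -> nat) :
  J1 P X1 Y1 e tau nu = (\int[P]_w (gJ X1 Y1 e (tau w) (nu w) w)%:E)%E.
Proof. by []. Qed.

Lemma J1_eps (P : probability Omega R) T (F G : nat -> set (set Omega))
   X1 Y1 (e : R) (tau nu : Omega -> nat) :
  is_filtration T F -> is_filtration T G ->
  adapted T F X1 -> adapted T F Y1 ->
  integrable_max P T X1 -> integrable_max P T Y1 ->
  stopping_time T F tau -> stopping_time T G nu -> 0 <= e ->
  (J1 P X1 Y1 e tau nu <= J1 P X1 Y1 0 tau nu + e%:E)%E /\
  ((forall w, (tau w <= nu w)%N) ->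
    J1 P X1 Y1 e tau nu = (J1 P X1 Y1 0 tau nu + e%:E)%E).
Proof.
move=> hF hG aX aY iX iY st sn e0.
have [tT _] := st; have [nT _] := sn.
have i0 : P.-integrable setT (fun w => (gJ X1 Y1 0 (tau w) (nu w) w)%:E).
  apply: (int_bound (e := 0)) iX iY _ _; first exact: gJ_meas hF hG aX aY st sn.
  by move=> w; exact: gJ_bound.
have ie : P.-integrable setT (fun w => (gJ X1 Y1 e (tau w) (nu w) w)%:E).
  apply: (int_bound (e := e)) iX iY _ _; first exact: gJ_meas hF hG aX aY st sn.
  by move=> w; exact: gJ_bound.
have ic := finite_measure_integrable_cst P e (@measurableT _ Omega).
have E : (J1 P X1 Y1 0 tau nu + e%:E =
   \int[P]_w ((gJ X1 Y1 0 (tau w) (nu w) w)%:E + (EFin \o cst e) w))%E.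
  rewrite integralD //; congr (_ + _)%E.
  have := integral_cst P (@measurableT _ Omega) e%:E.
  move=> ->; rewrite -[LHS]mule1; congr (_ * _)%E; apply/esym; exact: probability_setT.
rewrite E !J1E; split.
  apply: le_integral => //; first exact: integrableD.
  by move=> w _; rewrite /= -EFinD lee_fin /gJ; case: ifP => _; case: ifP => _; lra.
move=> h; apply: eq_integral => w _; rewrite /= -EFinD /gJ h.
by rewrite ltnNge h /=; congr EFin; lra.
Qed.

Lemma J1_min (P : probability Omega R) T (F G : nat -> set (set Omega))
   X1 Y1 (tau nu : Omega -> nat) :
  is_filtration T F -> is_filtration T G ->
  (forall t, (t <= T)%N -> G t `<=` F t) ->
  adapted T F X1 -> adapted T F Y1 ->
  integrable_max P T X1 -> integrable_max P T Y1 ->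
  (forall t, (t <= T)%N -> {ae P, forall w, Y1 t w <= X1 t w}) ->
  stopping_time T F tau -> stopping_time T G nu ->
  (J1 P X1 Y1 0 tau nu <= J1 P X1 Y1 0 (fun w => minn (tau w) (nu w)) nu)%E.
Proof.
move=> hF hG GF aX aY iX iY hae st sn.
have st2 := st_min hF GF st sn.
have [nT _] := sn.
have hall : {ae P, forall w, forall t, (t <= T)%N -> Y1 t w <= X1 t w}.
  suff H : forall n, {ae P, forall w, forall t, (t < n)%N -> (t <= T)%N ->
       Y1 t w <= X1 t w}.
    by apply: filterS (H T.+1) => w H1 t tT; apply: H1.
  elim => [|n IH]; first by apply: aeW => w t.
  case: (leqP n T) => nT'.
    apply: filterS2 IH (hae n nT') => w H1 H2 t.
    by rewrite ltnS leq_eqVlt => /orP[/eqP->|/H1]//.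
  by apply: filterS IH => w H1 t tn tT; apply: H1 => //; lia.
pose a w := gJ X1 Y1 0 (tau w) (nu w) w.
pose b w := gJ X1 Y1 0 (minn (tau w) (nu w)) (nu w) w.
have ma : measurable_fun setT a by exact: gJ_meas hF hG aX aY st sn.
have mb : measurable_fun setT b by exact: gJ_meas hF hG aX aY st2 sn.
have [tT _] := st.
have ab : forall w, (forall t, (t <= T)%N -> Y1 t w <= X1 t w) -> a w <= b w.
  move=> w H; rewrite /a /b /gJ.
  case: (leqP (tau w) (nu w)) => h.
    have h' : (nu w < tau w)%N = false by rewrite ltnNge h.
    rewrite ?h ?h' ?leqnn ?ltnn /=; lra.
  have h' : (tau w <= nu w)%N = false by rewrite leqNgt h.
  rewrite ?h ?h' ?leqnn ?ltnn /=.
  have := H _ (nT w); lra.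
pose h := a \min b.
have mh : measurable_fun setT h by exact: measurable_realfun.measurable_minr.
have ib : P.-integrable setT (fun w => (b w)%:E).
  apply: (int_bound (e := 0)) iX iY mb _.
  by move=> w; apply: gJ_bound => //; rewrite geq_min tT.
have ih : P.-integrable setT (fun w => (h w)%:E).
  apply: (int_bound (e := 0)) iX iY mh _.
  move=> w; have [->|->] : h w = a w \/ h w = b w.
      by rewrite /h /= minEle; case: ifP => _; [left|right].
    exact: gJ_bound.
  by apply: gJ_bound => //; rewrite geq_min tT.
rewrite !J1E.
have -> : (\int[P]_w (gJ X1 Y1 0 (tau w) (nu w) w)%:E = \int[P]_w (h w)%:E)%E.
  apply: ae_eq_integral => //.
  - exact/measurable_realfun.measurable_EFinP.
  - exact/measurable_realfun.measurable_EFinP.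
  apply: filterS hall => w H _; congr EFin; rewrite /h /=.
  by rewrite min_l //; exact: ab.
apply: le_integral => // w _; rewrite lee_fin /h /=; by rewrite ge_min lexx orbT.
Qed.

End Aux.


Local Open Scope ring_scope.
Theorem lemma1 (d : measure_display) (Omega : measurableType d) (R : realType)
  (P : probability Omega R) (T : nat) (F G : nat -> set (set Omega))
  (X1 X2 Y1 Y2 : nat -> Omega -> R) (eps : R) (tau0 nu0 : Omega -> nat) :
  (0 < T)%N ->
  is_filtration T F -> is_filtration T G ->
  (forall t, (t <= T)%N -> G t `<=` F t) ->
  adapted T F X1 -> adapted T F X2 -> adapted T F Y1 -> adapted T F Y2 ->
  adapted T G X2 -> adapted T G Y2 ->
  integrable_max P T X1 -> integrable_max P T X2 ->
  integrable_max P T Y1 -> integrable_max P T Y2 ->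
  (forall t, (t <= T)%N -> {ae P, forall w, Y1 t w <= X1 t w}) ->
  0 < eps ->
  nash_eq (stopping_time T F) (stopping_time T G)
    (J1 P X1 Y1 eps) (J2 P X2 Y2) tau0 nu0 ->
  nash_eq (stopping_time T F) (stopping_time T G)
    (J1 P X1 Y1 0) (J2 P X2 Y2) tau0 nu0.
Proof.
move=> T0 hF hG GF aX1 aX2 aY1 aY2 _ _ iX1 iX2 iY1 iY2 hae e0 [st0 [sn0 [N1 N2]]].
split => //; split => //; split => // tau stau.
have st2 := st_min hF GF stau sn0.
have e0' : 0 <= eps by exact: ltW.
have [_ B] := J1_eps (e := eps) hF hG aX1 aY1 iX1 iY1 st2 sn0 e0'.
have [C _] := J1_eps (e := eps) hF hG aX1 aY1 iX1 iY1 st0 sn0 e0'.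
have A := J1_min hF hG GF aX1 aY1 iX1 iY1 hae stau sn0.
have D := N1 _ st2.
rewrite B in D; last by move=> w; exact: geq_minr.
apply: le_trans A _.
rewrite -(leeD2rE _ _ (fin_numE eps%:E)) ?fin_num_EFin //.
exact: le_trans D C.
Qed.
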